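(* Let $c,o$ be vertices with a directed path from $c$ to $o$, and put $\delta=\delta_{co}$. Assume that the polynomials $b(s)q(s)$ and $a(s)p(s)$ have no common root. If $s_0$ is a root of $b(s)q(s)$ of multiplicity $m$, then $s_0$ is a zero of the rational function $T_{co}(s)$ of multiplicity exactly $(\delta+1)m$.
   Context: $\mathcal G$ is a weighted directed graph on $\{1,\dots,N\}$ with adjacency matrix $A=[a_{ij}]$. Here $a_{ij}>0$ if there is an arc from $j$ to $i$ and $a_{ij}=0$ otherwise (no self-loops). The Laplacian is $L=D-A$ with $D=\mathrm{diag}(\sum_j a_{ij})$. A directed path from $u$ to $w$ is a sequence of distinct vertices $u=v_0,\dots,v_\ell=w$ with an arc from $v_k$ to $v_{k+1}$ for each $k$, and $\ell$ is its length. $\delta_{uw}$ is the length of a shortest directed path from $u$ to $w$. $e_i$ is the $i$-th canonical basis vector. Let $a,b,p,q$ be nonzero real polynomials and $M(s)=\frac{b(s)q(s)}{a(s)p(s)}$. The network is $y=M(s)[-Ly+r]$. $T_{co}(s)=e_o^T(I+M(s)L)^{-1}M(s)e_c$ is the transfer function from $r_c$ to $y_o$ with all other inputs zero. *)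

(* Defs.v *)
From HB Require Import structures.
From mathcomp Require Import all_boot all_order all_algebra.
Set Implicit Arguments. Unset Strict Implicit. Unset Printing Implicit Defensive.
Import Order.TTheory GRing.Theory Num.Theory.
Local Open Scope ring_scope.

Section Defs.
Variable C : numClosedFieldType.
Variable N : nat.

Definition ratfun := {fraction {poly C}}.
Definition polyF (p : {poly C}) : ratfun := FracField.tofrac p.

(* Weighted digraph: A i j > 0 iff arc from j to i. *)
Definition weighted_digraph (A : 'M[C]_N) : Prop :=
  (forall i j, 0 <= A i j) /\ (forall i, A i i = 0).

Definition arc (A : 'M[C]_N) (x y : 'I_N) : bool := 0 < A y x.

Definition laplacian (A : 'M[C]_N) : 'M[C]_N :=
  \matrix_(i, j) ((i == j)%:R * (\sum_k A i k) - A i j).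

Definition dpath (A : 'M[C]_N) (u w : 'I_N) (l : nat) : Prop :=
  exists p : seq 'I_N,
    [/\ size p = l, path (arc A) u p, last u p = w & uniq (u :: p)].

Definition shortest_dist (A : 'M[C]_N) (u w : 'I_N) (delta : nat) : Prop :=
  dpath A u w delta /\ (forall l, dpath A u w l -> (delta <= l)%N).

Definition Mfun (a b p q : {poly C}) : ratfun := polyF (b * q) / polyF (a * p).

Definition Tco (A : 'M[C]_N) (a b p q : {poly C}) (c o : 'I_N) : ratfun :=
  let L : 'M[ratfun]_N := map_mx (fun x => polyF x%:P) (laplacian A) in
  let M := Mfun a b p q in
  ((delta_mx o 0 : 'cV[ratfun]_N)^T *m invmx (1%:M + M *: L)
     *m (M *: (delta_mx c 0 : 'cV[ratfun]_N))) 0 0.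

Definition ratfun_zero_mult (f : ratfun) (s0 : C) (k : nat) : Prop :=
  exists u v : {poly C},
    [/\ u.[s0] != 0, v.[s0] != 0 &
        f = polyF (('X - s0%:P) ^+ k * u) / polyF v].
End Defs.

(* Main.v *)
Require Import Defs.
From HB Require Import structures.
From mathcomp Require Import all_boot all_order all_algebra.
From mathcomp Require Import ring lra.
Import Order.TTheory GRing.Theory Num.Theory.
Local Open Scope ring_scope.

Section Comb.
Variable C : numClosedFieldType.
Variable N : nat.
Variable A : 'M[C]_N.
Variable c : 'I_N.
Hypothesis wd : weighted_digraph A.

Definition Bm : 'M[{poly C}]_N :=
  \matrix_(i, j) ((i == j)%:R + 'X * (laplacian A i j)%:P).

Local Notation P := (\det Bm).
Local Notation y i := (\adj Bm i c).

Lemma adj_eq i : y i + 'X * \sum_j (laplacian A i j)%:P * y j = if i == c then P else 0.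
Proof.
have := congr1 (fun X : 'M[{poly C}]_N => X i c) (mul_mx_adj Bm); rewrite [LHS]mxE [RHS]mxE.
have -> : (if i == c then P else 0) = P *+ (i == c) by case: (i == c).
move=> <-; symmetry.
under eq_bigr => j _ do rewrite mxE mulrDl -mulrA.
rewrite big_split /= mulr_sumr; congr (_ + _).
rewrite (bigD1 i) //= eqxx mul1r big1 ?addr0 // => j /negbTE.
by rewrite eq_sym => ->; rewrite mul0r.
Qed.

Lemma P0 : P`_0 = 1.
Proof.
rewrite -horner_coef0 -horner_evalE -det_map_mx.
have -> : map_mx (horner_eval 0) Bm = 1%:M.
  by apply/matrixP => i j; rewrite !mxE horner_evalE !hornerE; case: (i == j); rewrite /= ?hornerE.
by rewrite det_scalar expr1n.
Qed.

Lemma coef_y0 i : (y i)`_0 = (i == c)%:R.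
Proof.
have := congr1 (fun p : {poly C} => p`_0) (adj_eq i).
rewrite /= coefD coefXM /= addr0 => ->.
by case: (i == c); rewrite ?P0 ?coef0.
Qed.

Lemma coef_yS i k : (y i)`_k.+1 =
  (if i == c then P`_k.+1 else 0) - \sum_j laplacian A i j * (y j)`_k.
Proof.
have := congr1 (fun p : {poly C} => p`_k.+1) (adj_eq i).
rewrite /= coefD coefXM /= coef_sum.
move=> h.
have e : \sum_j ((laplacian A i j)%:P * y j)`_k = \sum_j laplacian A i j * (y j)`_k.
  by apply: eq_bigr => j _; rewrite coefCM.
rewrite e in h; have -> : (if i == c then P`_k.+1 else 0) = (if i == c then P else 0)`_k.+1.
  by case: (i == c); rewrite ?coef0.
by rewrite -h addrK.
Qed.

Fixpoint near (k : nat) (i : 'I_N) : bool :=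
  if k is k'.+1 then near k' i || [exists j, near k' j && Defs.arc A j i]
  else i == c.

Definition nearlt k i := if k is k'.+1 then near k' i else false.

Lemma near_c k : near k c.
Proof. by elim: k => [|k IH] /=; rewrite ?eqxx ?IH. Qed.

Lemma lap_off i j : i != j -> laplacian A i j = - A i j.
Proof. by move=> /negbTE hij; rewrite mxE hij mul0r sub0r. Qed.

Lemma support k i : (y i)`_k != 0 -> near k i.
Proof.
elim: k i => [|k IH] i /=.
  by rewrite coef_y0; case: (i == c); rewrite ?eqxx.
rewrite coef_yS; case: (boolP (near k i)) => //= hi.
case: (eqVneq i c) => [eic|hic]; first by rewrite eic near_c in hi.
rewrite sub0r oppr_eq0 => /eqP hs.
case: (boolP [exists j, near k j && Defs.arc A j i]) => // /existsPn hn; exfalso; apply: hs.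
apply: big1 => j _.
have := hn j; rewrite negb_and => /orP [hj|hj].
  by apply/eqP; rewrite mulf_eq0; apply/orP; right; apply: contraR hj; apply: IH.
case: (eqVneq i j) => [eij|nij].
  by subst j; have /eqP -> := contraNT (IH i) hi; rewrite mulr0.
rewrite lap_off //.
have: A i j == 0.
  rewrite /Defs.arc in hj; case: wd => hge _.
  by move: (hge i j); rewrite le0r (negbTE hj) orbF.
by move/eqP ->; rewrite oppr0 mul0r.
Qed.

Lemma yzero k i : ~~ near k i -> (y i)`_k = 0.
Proof. by move=> h; apply/eqP; apply: contraR h; apply: support. Qed.

Lemma positive k i : near k i -> ~~ nearlt k i -> 0 < (y i)`_k.
Proof.
elim: k i => [|k IH] i /=.
  by move=> /eqP -> _; rewrite coef_y0 eqxx ltr01.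
move=> hn hni; case/orP: hn => [hk|hex]; first by rewrite hk in hni.
have hic : i != c by apply: contraNneq hni => ->; apply: near_c.
rewrite coef_yS (negbTE hic) sub0r -sumrN.
have hterm j : - (laplacian A i j * (y j)`_k) = A i j * (y j)`_k.
  case: (eqVneq i j) => [<-|nij]; first by rewrite (yzero _ _ hni) !mulr0 oppr0.
  by rewrite lap_off // mulNr opprK.
under eq_bigr => j _ do rewrite hterm.
case/existsP: hex => j0 /andP [hj0 harc].
have hA j : 0 <= A i j by case: wd.
have nlt j : Defs.arc A j i -> ~~ nearlt k j.
  move=> ha; apply: contra hni; case: k {IH hj0 hterm} => //= k hk.
  by apply/orP; right; apply/existsP; exists j; rewrite hk.
rewrite (bigD1 j0) //=.
apply: (@lt_le_trans _ _ (A i j0 * (y j0)`_k)).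
  by apply: mulr_gt0 => //; apply: IH => //; apply: nlt.
rewrite lerDl; apply: sumr_ge0 => j _.
case: (boolP (near k j)) => hj; last by rewrite (yzero _ _ hj) mulr0.
case: (boolP (nearlt k j)) => hlt.
  case: (boolP (Defs.arc A j i)) => ha; first by move: (nlt j ha); rewrite hlt.
  have: A i j == 0 by move: (hA j); rewrite le0r /Defs.arc in ha *; rewrite (negbTE ha) orbF.
  by move/eqP ->; rewrite mul0r.
by apply: mulr_ge0 => //; apply: ltW; apply: IH.
Qed.

Lemma path_near p : path (Defs.arc A) c p -> near (size p) (last c p).
Proof.
elim/last_ind: p => [|p x IH] /=; first by rewrite eqxx.
rewrite rcons_path size_rcons last_rcons => /andP [hp ha] /=.
by apply/orP; right; apply/existsP; exists (last c p); rewrite IH.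
Qed.

Lemma near_path k i : near k i ->
  exists p, [/\ (size p <= k)%N, path (Defs.arc A) c p & last c p = i].
Proof.
elim: k i => [|k IH] i /=; first by move/eqP ->; exists [::].
case/orP => [/IH [p [hs hp hl]]|/existsP [j /andP [hj ha]]].
  by exists p; split => //; apply: leqW.
have [p [hs hp hl]] := IH j hj.
exists (rcons p i); rewrite size_rcons rcons_path last_rcons hl hp ha; split => //.
Qed.

Lemma near_dpath k i : near k i -> exists l, (l <= k)%N /\ dpath A c i l.
Proof.
move/near_path => [p [hs hp <-]].
case: (shortenP hp) => p' hp' hu hsub.
exists (size p'); split; last by exists p'.
apply: leq_trans hs; apply: uniq_leq_size => //.
by move: hu; rewrite cons_uniq => /andP [].
Qed.

End Comb.

Section Alg.
Variable C : numClosedFieldType.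
Local Notation F := {fraction {poly C}}.
Local Notation "x %:F" := (@FracField.tofrac _ x) (format "x %:F").
Definition embC : C -> F := (@FracField.tofrac _) \o polyC.
HB.instance Definition _ := GRing.RMorphism.on embC.
Variables n d : {poly C}.
Hypothesis d0 : d != 0.
Definition Mv : F := (n%:F) / (d%:F).
Lemma cfu : commr_rmorph embC Mv. Proof. by move=> x; apply: mulrC. Qed.
Definition phi := horner_morph cfu.

Definition homz (G : {poly C}) : {poly C} :=
  \sum_(i < size G) (G`_i)%:P * n ^+ i * d ^+ (size G - i).

Lemma dF0 : d%:F != 0 :> F. Proof. by rewrite tofrac_eq0. Qed.

Lemma phi_hom G : phi G * (d%:F) ^+ (size G) = (homz G)%:F.
Proof.
rewrite /phi /horner_morph horner_coef size_map_poly mulr_suml /homz rmorph_sum.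
apply: eq_bigr => i _; rewrite coef_map /= /embC /= !rmorphM !rmorphXn /=.
rewrite (_ : d%:F ^+ size G = d%:F ^+ i * d%:F ^+ (size G - i)); last first.
  by rewrite -exprD subnKC // ltnW.
rewrite /Mv expr_div_n.
have hd : d%:F ^+ i != 0 by rewrite expf_neq0 // dF0.
by rewrite mulrA -(mulrA _ (_ / _)) divfK.
Qed.

Lemma hom_eval (G : {poly C}) (s0 : C) : n.[s0] = 0 -> (0 < size G)%N -> (homz G).[s0] = G`_0 * d.[s0] ^+ size G.
Proof.
move=> hn hs; rewrite /homz horner_sum; case: (size G) hs => // k _.
rewrite big_ord_recl /= !hornerE subn0 big1 ?addr0 //.
by move=> i _; rewrite !hornerE hn /bump /= add1n expr0n /= mulr0 mul0r.
Qed.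
End Alg.

Lemma field_id (K : fieldType) (x y z w Y1 Y2 Xd Yd : K) :
  y != 0 -> w != 0 -> Y1 != 0 -> Y2 != 0 -> Yd != 0 ->
  x / y * ((w / Y1)^-1 * (z / Y2 * (Xd / Yd))) =
  (x * Xd * z * Y1) / (y * Yd * Y2 * w).
Proof. by move=> ? ? ? ? ?; field; apply/and5P. Qed.

Lemma delta_entry (K : fieldType) (N : nat) (X : 'M[K]_N) (M : K) (o c : 'I_N) :
  ((delta_mx o 0 : 'cV[K]_N)^T *m X *m (M *: (delta_mx c 0 : 'cV[K]_N))) 0 0
  = M * X o c.
Proof.
by rewrite trmx_delta -rowE -scalemxAr -colE !mxE.
Qed.

Theorem corollary1 (C : numClosedFieldType) (N : nat) (A : 'M[C]_N)
  (a b p q : {poly C}) (c o : 'I_N) (delta m : nat) (s0 : C) :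
  weighted_digraph A ->
  a \is a polyOver Num.real -> b \is a polyOver Num.real ->
  p \is a polyOver Num.real -> q \is a polyOver Num.real ->
  a != 0 -> b != 0 -> p != 0 -> q != 0 ->
  shortest_dist A c o delta ->
  (forall z : C, ~~ (root (b * q) z && root (a * p) z)) ->
  root (b * q) s0 -> mup s0 (b * q) = m ->
  ratfun_zero_mult (Tco A a b p q c o) s0 ((delta + 1) * m)%N.
Proof.
move=> wd _ _ _ _ a0 b0 p0 q0 [hdp hmin] copr rs0 hmup.
set n := b * q in copr rs0 hmup *; set d := a * p in copr *.
have d0 : d != 0 by rewrite mulf_neq0.
have n0 : n != 0 by rewrite mulf_neq0.
have ds0 : d.[s0] != 0 by move: (copr s0); rewrite rs0.
have hns0 : n.[s0] = 0 by apply/eqP.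
have [u0 hu0 hn] : exists2 u0 : {poly C}, u0.[s0] != 0 & n = ('X - s0%:P) ^+ m * u0.
  case: (multiplicity_XsubC n s0) => m' [r hr hnr].
  rewrite n0 /= in hr.
  have hm : m = m' by rewrite -hmup hnr mupMr // mup_XsubCX eqxx.
  by exists r => //; rewrite hm hnr mulrC.
set B := Bm C N A.
set Pd := \det B.
set Q := \adj B o c.
have nodist k : near C N A c k o -> (delta <= k)%N.
  move=> /near_dpath [l [hl hd]]; exact: leq_trans (hmin l hd) hl.
have hQlow k : (k < delta)%N -> Q`_k = 0.
  move=> hk; apply: (@yzero _ _ _ _ wd); apply/negP => /nodist; by rewrite leqNgt hk.
have hQd : Q`_delta != 0.
  have hnear : near C N A c delta o.
    case: hdp => s [hs hp hl _]; rewrite -hs -hl; exact: path_near.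
  have hnlt : ~~ nearlt C N A c delta o.
    case: delta hnear nodist {hQlow hmin hdp} => //= k _ h.
    by apply/negP => /h; rewrite ltnn.
  by have := @positive _ _ _ _ wd _ _ hnear hnlt; rewrite lt0r => /andP [].
set g := drop_poly delta Q.
have hQg : Q = g * 'X^delta.
  rewrite -{1}(poly_take_drop delta Q).
  have -> : take_poly delta Q = 0.
    apply/polyP => k; rewrite coef_take_poly coef0; case: ifP => // /hQlow //.
  by rewrite add0r.
have hg0 : g`_0 = Q`_delta by rewrite coef_drop_poly add0n.
have hP0 : Pd`_0 = 1 := P0 C N A.
set M := Mv C n d.
set ph := phi C n d.
have key : map_mx ph B = 1%:M + M *: map_mx (fun x => polyF x%:P) (laplacian A).
  rewrite /B /Bm; move: (laplacian A) => Lp.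
  apply/matrixP => i j; rewrite !mxE /ph /phi rmorphD rmorphM rmorph_nat.
  by rewrite /= horner_morphX horner_morphC.
have Pd0 : Pd != 0 by apply: contra_eq_neq hP0 => ->; rewrite coef0 eq_sym oner_neq0.
have g0 : g != 0 by apply: contra_neq hQd => hg; rewrite -hg0 hg coef0.
have hHP : (homz C n d Pd).[s0] != 0.
  rewrite (@hom_eval C n d Pd s0 hns0) ?size_poly_gt0 // hP0 mul1r; exact: expf_neq0.
have hHg : (homz C n d g).[s0] != 0.
  rewrite (@hom_eval C n d g s0 hns0) ?size_poly_gt0 // hg0; exact: mulf_neq0 (expf_neq0 _ _).
have HP0 : homz C n d Pd != 0 by apply: contra_neq hHP => ->; rewrite horner0.
have dF0 : FracField.tofrac d != 0 := dF0 C d d0.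
have phP : ph Pd = FracField.tofrac (homz C n d Pd) / FracField.tofrac d ^+ size Pd.
  have := congr1 (fun z => z / (FracField.tofrac d) ^+ size Pd) (@phi_hom C n d d0 Pd).
  rewrite /= mulfK; [by [] | exact: expf_neq0].
have phg : ph g = FracField.tofrac (homz C n d g) / FracField.tofrac d ^+ size g.
  have := congr1 (fun z => z / (FracField.tofrac d) ^+ size g) (@phi_hom C n d d0 g).
  rewrite /= mulfK; [by [] | exact: expf_neq0].
have phP0 : ph Pd != 0.
  rewrite phP; apply: mulf_neq0; first by rewrite tofrac_eq0.
  rewrite invr_eq0; exact: expf_neq0.
rewrite /Tco; change (Mfun a b p q) with M.
rewrite -key delta_entry /invmx unitmxE det_map_mx -/Pd unitfE phP0.
have ent : ((ph Pd)^-1 *: map_mx ph (\adj B)) o c = (ph Pd)^-1 * ph Q.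
  by rewrite mxE [X in _ * X]mxE.
have phQ : ph Q = ph g * M ^+ delta.
  by rewrite hQg /ph /phi rmorphM rmorphXn /= horner_morphX.
rewrite -map_mx_adj ent phQ phg phP.

set HP := homz C n d Pd in hHP HP0 *; set Hg := homz C n d g in hHg *.
set KP := size Pd; set Kg := size g.
clearbody n d HP Hg KP Kg.
exists (u0 ^+ delta.+1 * Hg * d ^+ KP), (d * d ^+ delta * d ^+ Kg * HP); split.
- by rewrite !hornerM !horner_exp; repeat apply: mulf_neq0; first [done | exact: expf_neq0].
- by rewrite !hornerM !horner_exp; repeat apply: mulf_neq0; first [done | exact: expf_neq0].
have hpoly : ('X - s0%:P) ^+ ((delta + 1) * m) * (u0 ^+ delta.+1 * Hg * d ^+ KP)
    = n * n ^+ delta * Hg * d ^+ KP.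
  by rewrite -exprS hn exprMn -exprM mulnC addn1 !mulrA.
rewrite hpoly /polyF; do 6 rewrite tofracM; do 4 rewrite tofracXn.
rewrite /M /Mv expr_div_n.
apply: field_id.
- exact: dF0.
- by rewrite tofrac_eq0.
- exact: expf_neq0 dF0.
- exact: expf_neq0 dF0.
- exact: expf_neq0 dF0.
Qed.
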